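(* Let $G$ be a reduced abelian group which is super directly finite and is not torsion-free. Then every $p$-primary component of $G$ (i.e., of its torsion subgroup) is finite.
   Context: All groups are abelian. A group $G$ is directly finite if there is no decomposition $G=A\oplus C$ with $C\ne0$ and $A\cong G$; $G$ is super directly finite if every epimorphic image of $G$ is directly finite. A group is reduced if it has no nonzero divisible subgroup. *)

(* Defs.v *)
From mathcomp Require Import all_boot all_algebra.
Set Implicit Arguments. Unset Strict Implicit. Unset Printing Implicit Defensive.
Import GRing.Theory.
Local Open Scope ring_scope.

Definition is_subgroup (G : zmodType) (S : G -> Prop) : Prop :=
  S 0 /\ (forall x y, S x -> S y -> S (x - y)).

Definition is_hom (G H : zmodType) (f : G -> H) : Prop :=
  forall x y, f (x - y) = f x - f y.

(* G is directly finite: there is no decomposition G = A (+) C (internal direct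
   sum of subgroups) with C <> 0 and A isomorphic to G.  "A isomorphic to G" is
   expressed as: some injective homomorphism G -> G has image exactly A. *)
Definition directly_finite (G : zmodType) : Prop :=
  ~ exists (A C : G -> Prop),
      [/\ is_subgroup A /\ is_subgroup C,
          (forall x, A x -> C x -> x = 0),
          (forall g, exists a c, A a /\ C c /\ g = a + c),
          (exists c, C c /\ c <> 0) &
          exists phi : G -> G,
            [/\ is_hom phi, injective phi &
                forall a, A a <-> exists g, phi g = a]].

Definition super_directly_finite (G : zmodType) : Prop :=
  forall (H : zmodType) (f : G -> H), is_hom f -> (forall y : H, exists x, f x = y) ->
    directly_finite H.

Definition reduced (G : zmodType) : Prop :=
  forall D : G -> Prop, is_subgroup D ->
    (forall x n, D x -> (0 < n)%N -> exists y, D y /\ y *+ n = x) ->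
    forall x, D x -> x = 0.

Definition torsion_free (G : zmodType) : Prop :=
  forall (x : G) n, (0 < n)%N -> x *+ n = 0 -> x = 0.

Definition p_primary (G : zmodType) (p : nat) (x : G) : Prop :=
  exists k, x *+ (p ^ k) = 0.

Definition finite_pred (G : eqType) (S : G -> Prop) : Prop :=
  exists s : seq G, forall x, S x -> x \in s.

(* Main.v *)
Require Import Defs.
From mathcomp Require Import all_boot all_algebra.
From mathcomp Require Import cyclic.
From mathcomp Require classical_sets.
From Stdlib Require Import Classical ClassicalEpsilon.
Set Implicit Arguments. Unset Strict Implicit. Unset Printing Implicit Defensive.
Import GRing.Theory.
Local Open Scope ring_scope.
Lemma aux2 (G : zmodType) (a b c : G) : (a - b) - (c - b) = a - c.
Proof. by rewrite opprB addrA subrK. Qed.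

Definition pmul (G : zmodType) (p : nat) (x : G) := exists h : G, x = h *+ p.

Lemma pp_sub (G : zmodType) p (x y : G) :
  p_primary p x -> p_primary p y -> p_primary p (x - y).
Proof.
move=> [a ha] [b hb]; exists (a + b)%N.
by rewrite mulrnBl expnD mulrnA ha mul0rn [(p^a * p^b)%N]mulnC mulrnA hb mul0rn subr0.
Qed.

Lemma pp_mul (G : zmodType) p (x : G) n : p_primary p x -> p_primary p (x *+ n).
Proof. by move=> [a ha]; exists a; rewrite mulrnAC ha mul0rn. Qed.

Lemma pp0 (G : zmodType) p : p_primary p (0 : G).
Proof. by exists 0%N; rewrite mul0rn. Qed.

Lemma pp_pure (G : zmodType) p (x : G) : p_primary p (x *+ p) -> p_primary p x.
Proof. by move=> [a ha]; exists a.+1; rewrite expnS mulrnA. Qed.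

Lemma mulrn_mod (G : zmodType) (x : G) M a : x *+ M = 0 -> x *+ a = x *+ (a %% M).
Proof.
move=> hM; rewrite {1}(divn_eq a M) mulrnDr mulnC mulrnA hM mul0rn add0r //.
Qed.

Definition span (G : zmodType) (t : seq G) (x : G) :=
  exists c : nat -> nat, x = \sum_(i < size t) t`_i *+ c i.

Lemma span0 (G : zmodType) (t : seq G) : span t 0.
Proof. by exists (fun _ => 0%N); rewrite big1. Qed.

Lemma spanD (G : zmodType) (t : seq G) x y : span t x -> span t y -> span t (x + y).
Proof.
move=> [c ->] [d ->]; exists (fun i => c i + d i)%N.
by rewrite -big_split /=; apply: eq_bigr => i _; rewrite mulrnDr.
Qed.

Lemma span_mem (G : zmodType) (t : seq G) z m : z \in t -> span t (z *+ m).
Proof.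
move=> zt; have jl : (index z t < size t)%N by rewrite index_mem.
exists (fun i => if i == index z t then m else 0%N).
rewrite (bigD1 (Ordinal jl)) //= eqxx nth_index // big1 ?addr0 //.
by move=> i /negbTE; rewrite -val_eqE /= => ->.
Qed.

Lemma cover_T (G : zmodType) p (s : seq G) : exists t : seq G,
  (forall z, z \in t -> p_primary p z) /\
  forall y, y \in s -> (exists z, p_primary p z /\ pmul p (z - y)) ->
    exists2 z, z \in t & pmul p (z - y).
Proof.
elim: s => [|y s [t [Ht Hs]]]; first by exists [::]; split.
have [[z0 [Tz0 hz0]]|nz] := classic (exists z, p_primary p z /\ pmul p (z - y)).
- exists (z0 :: t); split.
  + by move=> z; rewrite inE => /orP[/eqP ->|/Ht].
  + move=> y'; rewrite inE => /orP[/eqP -> _|/Hs H /H [z zt hz]].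
    * by exists z0; rewrite ?inE ?eqxx.
    * by exists z; rewrite ?inE ?zt ?orbT.
- exists t; split => // y'; rewrite inE => /orP[/eqP -> /nz //|/Hs//].
Qed.

Lemma finite_case (G : zmodType) p : prime p -> reduced G ->
  (exists s : seq G, forall x, exists2 y, y \in s & pmul p (x - y)) ->
  finite_pred (p_primary (G:=G) p).
Proof.
move=> pp redG [s Hs].
have [t [Ht Hts]] := cover_T p s.
have step : forall x, p_primary p x -> exists2 z, z \in t &
    exists h, p_primary p h /\ x = z + h *+ p.
  move=> x Tx; have [y ys [h1 h1e]] := Hs x.
  have [|z zt [h2 h2e]] := Hts y ys; first by exists x; split => //; exists h1.
  exists z => //; exists (h1 - h2); split; last first.
    by rewrite mulrnBl -h1e -h2e aux2 addrC subrK.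
  apply: pp_pure; rewrite mulrnBl -h1e -h2e aux2.
  exact: pp_sub (Tx) (Ht _ zt).
have [N HN] : exists N, forall z, z \in t -> z *+ p ^ N = 0.
  elim: (t) Ht => [|z t' IH] Ht'; first by exists 0%N.
  have [|N' HN'] := IH; first by move=> z' z't'; apply: Ht'; rewrite inE z't' orbT.
  have [a ha] := Ht' z (mem_head _ _).
  exists (a + N')%N => z'; rewrite inE => /orP[/eqP ->|/HN' h].
    by rewrite expnD mulrnA ha mul0rn.
  by rewrite expnD mulnC mulrnA h mul0rn.
have spanN : forall x, span t x -> x *+ p ^ N = 0.
  move=> _ [c ->]; rewrite -sumrMnl big1 // => i _.
  by rewrite mulrnAC HN ?mul0rn // mem_nth.
have dec : forall n x, p_primary p x -> exists f h,
    [/\ span t f, p_primary p h & x = f + h *+ p ^ n].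
  elim=> [|n IH] x Tx; first by exists 0, x; split => //; [exact: span0|rewrite add0r expn0].
  have [f [h [sf Th ->]]] := IH x Tx.
  have [z zt [h' [Th' ->]]] := step h Th.
  exists (f + z *+ p ^ n), h'; split => //; first by apply: spanD => //; apply: span_mem.
  by rewrite mulrnDl -addrA expnS mulrnA.
have deep : forall (x : G) k, p_primary p x ->
    exists y, p_primary p y /\ x *+ p ^ N = y *+ p ^ (N + k).
  move=> x k Tx; have [f [h [sf Th ->]]] := dec (N + k)%N x Tx.
  exists (h *+ p ^ N); split; first exact: pp_mul.
  by rewrite mulrnDl (spanN f) // add0r mulrnAC.
have killT : forall x : G, p_primary p x -> x *+ p ^ N = 0.
  move=> x Tx.
  apply: (redG (fun y => exists x, p_primary p x /\ y = x *+ p ^ N)); last by exists x.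
  - split; first by exists 0; split; [exact: pp0|rewrite mul0rn].
    move=> _ _ [x1 [T1 ->]] [x2 [T2 ->]]; exists (x1 - x2); split.
      exact: pp_sub.
    by rewrite mulrnBl.
  - move=> _ n [x0 [T0 ->]] n0.
    have [m cpm nE] := pfactor_coprime pp n0.
    set a := logn p n in nE.
    have [y0 [Ty0 ey0]] := deep x0 a T0.
    have [K hK] : p_primary p (x0 *+ p ^ N) by exact: pp_mul.
    set u := (m ^ (totient (p ^ K)).-1)%N.
    have um : (u * m = 1 %[mod p ^ K])%N.
      rewrite /u -expnSr prednK ?totient_gt0 ?expn_gt0 ?prime_gt0 //.
      apply: Euler_exp_totient; apply: coprimeXr; by rewrite coprime_sym.
    exists ((y0 *+ u) *+ p ^ N); split; first by exists (y0 *+ u); split => //; exact: pp_mul.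
    rewrite ey0 nE -!mulrnA.
    have -> : (u * (p ^ N * (m * p ^ a)) = p ^ (N + a) * (u * m))%N.
      by rewrite expnD mulnCA (mulnA u m) [((u * m) * _)%N]mulnC mulnA.
    rewrite mulrnA -ey0 (mulrn_mod _ hK) um -(mulrn_mod _ hK) //.
exists (map (fun f : {ffun 'I_(size t) -> 'I_(p ^ N)} => \sum_(i < size t) t`_i *+ (val (f i))) (enum {ffun 'I_(size t) -> 'I_(p ^ N)})).
move=> x Tx; have [_ [h [[c ->] Th ->]]] := dec N x Tx.
rewrite killT // addr0; apply/mapP.
have pN : (0 < p ^ N)%N by rewrite expn_gt0 prime_gt0.
exists [ffun i : 'I_(size t) => Ordinal (ltn_pmod (c i) pN)]; first by rewrite mem_enum.
apply: eq_bigr => i _; rewrite ffunE /=; apply: mulrn_mod.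
by apply: HN; rewrite mem_nth.
Qed.

Lemma aux3 (G : zmodType) (a b c : G) : (c - b) - (c - a) = a - b.
Proof. by rewrite opprB addrC addrA subrK. Qed.
Lemma pmul0 (G : zmodType) p : pmul p (0 : G).
Proof. by exists 0; rewrite mul0rn. Qed.
Lemma pmulB (G : zmodType) p (x y : G) : pmul p x -> pmul p y -> pmul p (x - y).
Proof. by move=> [a ->] [b ->]; exists (a - b); rewrite mulrnBl. Qed.
Lemma pmulN (G : zmodType) p (x : G) : pmul p x -> pmul p (- x).
Proof. by move=> h; rewrite -sub0r; apply: pmulB => //; apply: pmul0. Qed.
Lemma pmulD (G : zmodType) p (x y : G) : pmul p x -> pmul p y -> pmul p (x + y).
Proof. by move=> hx hy; rewrite -[y]opprK; apply: pmulB => //; apply: pmulN. Qed.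
Lemma pmulp (G : zmodType) p (x : G) : pmul p (x *+ p).
Proof. by exists x. Qed.
Lemma pmul_sum (G : zmodType) p n (F : 'I_n -> G) :
  (forall i, pmul p (F i)) -> pmul p (\sum_(i < n) F i).
Proof.
move=> h; apply: (big_ind (pmul p)) => //; [exact: pmul0 | exact: pmulD].
Qed.
Lemma pmul_mod (G : zmodType) p (x : G) a : pmul p (x *+ (a %% p) - x *+ a).
Proof.
exists (- x *+ (a %/ p)).
rewrite {2}(divn_eq a p) mulrnDr opprD addrCA subrr addr0 mulrnA -!mulNrn //.
Qed.
Lemma pmul_modeq (G : zmodType) p (x : G) a b : (a = b %[mod p])%N -> pmul p (x *+ a - x *+ b).
Proof.
move=> e; have := pmulB (pmul_mod p x b) (pmul_mod p x a).
by rewrite e aux3.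
Qed.

Lemma valFp_lt p (c : 'F_p) : prime p -> (nat_of_ord c < p)%N.
Proof. move=> pp; have -> : c = (nat_of_ord c)%:R :> 'F_p by rewrite natr_Zp.
by rewrite val_Fp_nat // ltn_pmod // prime_gt0. Qed.
Lemma valFpD p (a b : 'F_p) : prime p -> nat_of_ord (a + b) = ((nat_of_ord a + nat_of_ord b) %% p)%N.
Proof. move=> pp; have -> : a + b = (nat_of_ord a + nat_of_ord b)%:R :> 'F_p by rewrite natrD !natr_Zp.
by rewrite val_Fp_nat. Qed.
Lemma valFpMn p (a : 'F_p) m : prime p -> nat_of_ord (a *+ m) = ((nat_of_ord a * m) %% p)%N.
Proof. move=> pp; have -> : a *+ m = (nat_of_ord a * m)%:R :> 'F_p by rewrite natrM natr_Zp mulr_natr.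
by rewrite val_Fp_nat. Qed.

Definition lincomb (G : zmodType) p (s : seq G) (c : nat -> nat) : G :=
  \sum_(i < size s) s`_i *+ (c i %% p).

Definition nextG (G : zmodType) p (s : seq G) : G :=
  epsilon (inhabits 0) (fun x => forall c, ~ pmul p (x - lincomb p s c)).

Lemma nextG_spec (G : zmodType) p (s : seq G) : prime p ->
  ~ (exists s : seq G, forall x, exists2 y, y \in s & pmul p (x - y)) ->
  forall c, ~ pmul p (nextG p s - lincomb p s c).
Proof.
move=> pp NC; apply: (epsilon_spec (inhabits 0) (fun x => forall c, ~ pmul p (x - lincomb p s c))).
apply: NNPP => nx; apply: NC.
have p0 : (0 < p)%N by rewrite prime_gt0.
exists (map (fun f : {ffun 'I_(size s) -> 'I_p} => \sum_(i < size s) s`_i *+ val (f i))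
   (enum {ffun 'I_(size s) -> 'I_p})).
move=> x; have [c hc] : exists c, pmul p (x - lincomb p s c).
  apply: NNPP => nc; apply: nx; exists x => c hc; apply: nc; by exists c.
exists (lincomb p s c) => //; apply/mapP.
exists [ffun i : 'I_(size s) => Ordinal (ltn_pmod (c i) p0)]; first by rewrite mem_enum.
by apply: eq_bigr => i _; rewrite ffunE.
Qed.

Definition sqG (G : zmodType) (p n : nat) : seq G :=
  iter n (fun s => rcons s (nextG p s)) [::].
Definition gG (G : zmodType) (p n : nat) : G := nextG p (sqG G p n).

Lemma sqG_eq (G : zmodType) p n : sqG G p n = mkseq (gG G p) n.
Proof. by elim: n => [//|n IH]; rewrite mkseqS -IH. Qed.

Lemma g_indep0 (G : zmodType) p : prime p ->
  ~ (exists s : seq G, forall x, exists2 y, y \in s & pmul p (x - y)) ->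
  forall n (c : nat -> nat), ~ pmul p (gG G p n - \sum_(i < n) gG G p i *+ (c i %% p)).
Proof.
move=> pp NC n c.
have := nextG_spec (s := sqG G p n) (c := c) pp NC.
rewrite /lincomb.
have -> : gG G p n = nextG p (sqG G p n) by [].
rewrite [in X in pmul p (_ - X)]sqG_eq size_mkseq.
by under eq_bigr => i _ do rewrite nth_mkseq //; apply.
Qed.

Definition Eb (G : zmodType) p (g : nat -> G) n (q : {poly 'F_p}) : G :=
  \sum_(i < n) g i *+ nat_of_ord q`_i.
Definition E (G : zmodType) p (g : nat -> G) (q : {poly 'F_p}) : G := Eb g (size q) q.

Lemma E_ext (G : zmodType) p (g : nat -> G) n (q : {poly 'F_p}) :
  (size q <= n)%N -> Eb g n q = E g q.
Proof.
move=> le; rewrite /E /Eb (big_ord_widen _ (fun i => g i *+ nat_of_ord q`_i) le) [in RHS]big_mkcond.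
by apply: eq_bigr => i _; case: ltnP => // h; rewrite nth_default.
Qed.

Lemma Eb_add (G : zmodType) p (g : nat -> G) n (q1 q2 : {poly 'F_p}) : prime p ->
  pmul p (Eb g n (q1 + q2) - (Eb g n q1 + Eb g n q2)).
Proof.
move=> pp; rewrite /Eb -big_split -sumrB /=; apply: pmul_sum => i.
by rewrite coefD valFpD // -mulrnDr; apply: pmul_mod.
Qed.

Lemma Eb_mul (G : zmodType) p (g : nat -> G) n (q : {poly 'F_p}) m : prime p ->
  pmul p (Eb g n (q *+ m) - (Eb g n q) *+ m).
Proof.
move=> pp; rewrite /Eb -sumrMnl -sumrB /=; apply: pmul_sum => i.
by rewrite coefMn valFpMn // -mulrnA; apply: pmul_mod.
Qed.

Lemma E_sub (G : zmodType) p (g : nat -> G) (q1 q2 : {poly 'F_p}) : prime p ->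
  pmul p (E g (q1 - q2) - (E g q1 - E g q2)).
Proof.
move=> pp; set n := maxn (size q1) (size q2).
have h1 : (size q1 <= n)%N by rewrite leq_maxl.
have h2 : (size q2 <= n)%N by rewrite leq_maxr.
have h3 : (size (q1 - q2)%R <= n)%N.
  by apply: leq_trans (size_polyD _ _) _; rewrite size_polyN.
rewrite -(E_ext g h1) -(E_ext g h2) -(E_ext g h3).
have := Eb_add g n (q1 - q2) q2 pp; rewrite subrK => h.
have -> : Eb g n (q1 - q2) - (Eb g n q1 - Eb g n q2) =
  - (Eb g n q1 - (Eb g n (q1 - q2) + Eb g n q2)).
  by rewrite !opprB addrA.
exact: pmulN.
Qed.

Lemma E_mul (G : zmodType) p (g : nat -> G) (q : {poly 'F_p}) m : prime p ->
  pmul p (E g (q *+ m) - (E g q) *+ m).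
Proof.
move=> pp; have h : (size (q *+ m)%R <= size q)%N.
  by apply/leq_sizeP => j hj; rewrite coefMn nth_default // mul0rn.
rewrite -(E_ext g h) /E; exact: Eb_mul.
Qed.

Lemma aux4 (G : zmodType) (a b c d : G) : d - a = (b + c) - (a + b) - (c - d).
Proof. by rewrite [b + c]addrC [a + b]addrC addrKA aux3. Qed.
Lemma aux5 (G : zmodType) (x y z : G) : x + y = (x - z) + (z + y).
Proof. by rewrite addrA subrK. Qed.

Lemma natpred_aux (X p : nat) : (0 < p)%N -> (X * p.-1 + X = X * p)%N.
Proof. by case: p => // p _; rewrite mulnS addnC. Qed.

Lemma pmulMn (G : zmodType) p (x : G) m : pmul p x -> pmul p (x *+ m).
Proof. by move=> [h ->]; exists (h *+ m); rewrite mulrnAC. Qed.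

Lemma Fp_val0 p (c : 'F_p) : nat_of_ord c = 0%N -> c = 0.
Proof. by move=> h; rewrite -(natr_Zp c) h. Qed.

Lemma inv_mod p v : prime p -> (0 < v < p)%N -> exists m, (v * m = 1 %[mod p])%N.
Proof.
move=> pp /andP[v0 vp].
have cp : coprime v p.
  rewrite coprime_sym prime_coprime //; apply/negP => /(dvdn_leq v0).
  by rewrite leqNgt vp.
exists (v ^ (totient p).-1)%N.
by rewrite -expnS prednK ?totient_gt0 ?prime_gt0 //; apply: Euler_exp_totient.
Qed.

Lemma E_indep (G : zmodType) p : prime p ->
  ~ (exists s : seq G, forall x, exists2 y, y \in s & pmul p (x - y)) ->
  forall q : {poly 'F_p}, pmul p (E (gG G p) q) -> q = 0.
Proof.
move=> pp NC q hq; apply: NNPP => qn0.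
have qs : (0 < size q)%N by rewrite size_poly_gt0; apply/eqP.
move: hq; rewrite /E /Eb -(prednK qs) big_ord_recr /=.
set n := (size q).-1.
set g := gG G p.
set v := nat_of_ord q`_n.
have vpos : (0 < v < p)%N.
  rewrite valFp_lt // andbT lt0n; apply/negP => /eqP /Fp_val0 h.
  by apply: qn0; apply/eqP; rewrite -lead_coef_eq0 lead_coefE h.
have [m vm] := inv_mod pp vpos.
move=> /(pmulMn m); rewrite mulrnDl -sumrMnl -mulrnA => hq.
set c := fun i : nat => (nat_of_ord (q`_i)%R * m * p.-1)%N.
apply: (g_indep0 pp NC (n := n) (c := c)).
rewrite (aux4 _ (\sum_(i < n) g i *+ nat_of_ord (q`_i)%R *+ m) (g n *+ (v * m))).
apply: pmulB; first apply: pmulB => //.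
- rewrite -big_split /=; apply: pmul_sum => i.
  rewrite -mulrnA (aux5 _ _ (g i *+ c i)) -mulrnDr; apply: pmulD; first exact: pmul_mod.
  have -> : (c i + nat_of_ord (q`_i)%R * m = nat_of_ord (q`_i)%R * m * p)%N.
    by rewrite /c natpred_aux // prime_gt0.
  by rewrite mulrnA; apply: pmulp.
- rewrite -[X in _ - X](mulr1n (g n)); apply: pmul_modeq; rewrite vm.
  by rewrite modn_small ?prime_gt1.
Qed.

Definition goodP (G : zmodType) p (EE : {poly 'F_p} -> G) (X : G -> Prop) : Prop :=
  [/\ (forall x y, X x -> X y -> X (x - y)), (forall x y, X y -> X (x *+ p)) &
      (forall q, X (EE q) -> q = 0)].

Lemma good_max (G : zmodType) p (EE : {poly 'F_p} -> G) :
  exists A, goodP EE A /\ forall B, classical_sets.proper A B -> ~ goodP EE B.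
Proof.
apply: classical_sets.Zorn_bigcup => F FP Ftot; split.
- move=> x y [X FX Xx] [Y FY Yy].
  have [XY|YX] := Ftot X Y FX FY.
  + by exists Y => //; have [h _ _] := FP Y FY; apply: h => //; apply: XY.
  + by exists X => //; have [h _ _] := FP X FX; apply: h => //; apply: YX.
- move=> x y [X FX Xy]; exists X => //; have [_ h _] := FP X FX; exact: h Xy.
- move=> q [X FX Xq]; have [_ _ h] := FP X FX; exact: h.
Qed.
Lemma aux7 (G : zmodType) (x y k e : G) : x - e = (x - y) + ((k + y) - e) - k.
Proof.
rewrite [k + y]addrC !addrA subrK addrAC addrK //.
Qed.
Lemma aux9 (G : zmodType) (x y a b : G) : (x - a) - (y - b) = (x - y) - (a - b).
Proof. by rewrite !opprB addrACA [in RHS]addrACA [- y - a]addrC. Qed.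
Lemma aux8 (G : zmodType) (x y e a b : G) :
  (x - y) - e = ((x - a) - (y - b)) - (e - (a - b)).
Proof. by rewrite [(x - a) - _]aux9 aux2. Qed.
Lemma aux6 (G : zmodType) (k1 k2 a b c : G) :
  k1 + a - (k2 + b) = k1 - k2 - (c + b) + (a + c).
Proof.
rewrite addrACA !opprD [- c - b + c]addrAC addNr add0r addrA [k1 + a - k2]addrAC //.
Qed.

Lemma infinite_case (G : zmodType) p : prime p ->
  ~ (exists s : seq G, forall x, exists2 y, y \in s & pmul p (x - y)) ->
  exists f : G -> {poly 'F_p}, is_hom f /\ (forall y, exists x, f x = y).
Proof.
move=> pp NC.
pose EE := @E G p (gG G p).
have indep : forall q, pmul p (EE q) -> q = 0 := E_indep pp NC.
have [A [[Asub Ap AE] Amax]] := good_max EE.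
have A0 : A 0.
  apply: NNPP => nA0; apply: (Amax (pmul p)).
  - split; first by move=> x Ax; exfalso; apply: nA0; rewrite -(subrr x); exact: Asub.
    by move=> Hs; apply: nA0; apply: Hs; exact: pmul0.
  - split; [exact: pmulB | move=> x y _; exact: pmulp | exact: indep].
have ApG : forall x, pmul p x -> A x by move=> _ [h ->]; exact: Ap A0.
have Aadd : forall x y, A x -> A y -> A (x + y).
  move=> x y Ax Ay; have -> : x + y = x - (0 - y) by rewrite sub0r opprK.
  by apply: (Asub) => //; apply: (Asub).
have AMn : forall x m, A x -> A (x *+ m).
  move=> x; elim=> [|m IH] Ax; first by rewrite mulr0n.
  by rewrite mulrS; apply: (Aadd) => //; apply: IH.
have Ecover : forall x, exists q, A (x - EE q).
  move=> x; apply: NNPP => nx.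
  have nx' : forall q, ~ A (x - EE q) by move=> q h; apply: nx; exists q.
  have E0 : EE 0 = 0 by rewrite /EE /E /Eb size_poly0 big_ord0.
  apply: (Amax (fun y => exists k n, A k /\ y = k + x *+ n)).
  - split; first by move=> y Ay; exists y, 0%N; rewrite mulr0n addr0.
    move=> h; apply: (nx' 0); rewrite E0 subr0; apply: h.
    by exists 0, 1%N; rewrite add0r mulr1n.
  - split.
    + move=> _ _ [k1 [n1 [A1 ->]]] [k2 [n2 [A2 ->]]].
      exists (k1 - k2 - (x *+ n2) *+ p), (n1 + n2 * p.-1)%N; split.
        by apply: (Asub); [exact: Asub | exact: Ap A1].
      rewrite -mulrnA -(natpred_aux n2 (prime_gt0 pp)) !mulrnDr.
      exact: aux6.
    + move=> z _ [k [n [Ak _]]]; exists (z *+ p), 0%N; split; first exact: Ap Ak.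
      by rewrite mulr0n addr0.
    + move=> q [k [n [Ak eq]]].
      have [/dvdnP [n' nE]|ndiv] := boolP (p %| n)%N.
      * apply: (AE); rewrite eq nE mulrnA; apply: (Aadd) => //; exact: Ap Ak.
      * exfalso.
        have vpos : (0 < n %% p < p)%N.
          apply/andP; split; last by rewrite ltn_pmod ?prime_gt0.
          by rewrite lt0n; exact: ndiv.
        have [m vm] := inv_mod pp vpos.
        apply: (nx' (q *+ m)).
        rewrite (aux7 _ (x *+ (n * m)) (k *+ m)).
        apply: (Asub); first apply: (Aadd).
        - apply: (ApG); rewrite -[X in X - _]mulr1n; apply: pmul_modeq.
          by rewrite -modnMml vm.
        - apply: (ApG); rewrite mulrnA -mulrnDl -eq; rewrite -opprB; apply: pmulN.
          exact: E_mul.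
        - exact: AMn.
have fP : forall x, A (x - EE (epsilon (inhabits 0) (fun q => A (x - EE q)))).
  by move=> x; apply: (epsilon_spec (inhabits 0) (fun q => A (x - EE q))); apply: Ecover.
have funiq : forall x q1 q2, A (x - EE q1) -> A (x - EE q2) -> q1 = q2.
  move=> x q1 q2 h1 h2; apply/eqP; rewrite -subr_eq0; apply/eqP; apply: (AE).
  rewrite -[EE (q1 - q2)](subrK (EE q1 - EE q2)); apply: (Aadd).
    exact/(ApG)/E_sub.
  by rewrite -(aux3 (EE q1) (EE q2) x); apply: (Asub).
exists (fun x => epsilon (inhabits 0) (fun q => A (x - EE q))); split.
- move=> x y; apply: (funiq (x - y)); first exact: fP.
  rewrite (aux8 _ _ _ (EE (epsilon (inhabits 0) (fun q => A (x - EE q))))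
                      (EE (epsilon (inhabits 0) (fun q => A (y - EE q))))).
  apply: (Asub); first by apply: (Asub); apply: (fP).
  exact/(ApG)/E_sub.
- move=> q; exists (EE q); apply: (funiq (EE q)); first exact: fP.
  by rewrite subrr.
Qed.
Lemma poly_not_df (R : idomainType) : ~ directly_finite {poly R}.
Proof.
apply; exists (fun q => exists r, r * 'X = q), (fun q => exists c, q = c%:P).
split.
- split; split.
  + by exists 0; rewrite mul0r.
  + by move=> _ _ [r <-] [s <-]; exists (r - s); rewrite mulrBl.
  + by exists 0.
  + by move=> _ _ [a ->] [b ->]; exists (a - b); rewrite polyCB.
- move=> _ [r <-] [c hc]; have := congr1 (fun q : {poly R} => q`_0) hc.
  by rewrite coefMX coefC /= => c0; rewrite hc -c0.
- move=> g; exists (drop_poly 1 g * 'X), (g`_0)%:P.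
  split; first by exists (drop_poly 1 g).
  split; first by exists g`_0.
  have <- : take_poly 1 g = (g`_0)%:P.
    by apply/polyP => i; rewrite coef_take_poly coefC; case: i.
  by rewrite -{1}(poly_take_drop 1 g) expr1 addrC.
- by exists 1%:P; split; [exists 1|apply/eqP; rewrite polyC1 oner_neq0].
- exists (fun r => r * 'X); split.
  + by move=> x y; rewrite mulrBl.
  + by apply: mulIf; rewrite polyX_eq0.
  + by move=> a; split; move=> [g hg]; exists g.
Qed.

Theorem proposition5p4 (G : zmodType) :
  reduced G -> super_directly_finite G -> ~ torsion_free G ->
  forall p : nat, prime p -> finite_pred (p_primary (G:=G) p).
Proof.
move=> redG sdf _ p pp.
have [C|NC] := classic (exists s : seq G, forall x, exists2 y, y \in s & pmul p (x - y)).
- exact: finite_case pp redG C.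
- have [f [hf sf]] := infinite_case pp NC.
  by exfalso; apply: poly_not_df (sdf _ f hf sf).
Qed.
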